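(* There exists a constant $C$ (depending on the maximal curvature of $\Gamma$ but independent of the interface location relative to the mesh) such that, for $h$ small enough, every interface element $T$ satisfies $|T_{int}|\le Ch^3$, where $|\cdot|$ denotes area.
   Context: $\mathcal T_h$ is a Cartesian triangular or rectangular mesh of size $h$ of a bounded planar domain containing a curve $\Gamma$ that is $C^2$ inside each interface element (an element whose interior meets $\Gamma$), and which meets the boundary of each interface element $T$ at exactly two points $D,E$ lying on different edges. The set $T_{int}=\bigcup\{l_t\cap T: l_t \text{ is a tangent line to } \Gamma\cap T\}$ is the region of $T$ swept by tangent lines to $\Gamma\cap T$. *)

(* Defs.v *)
From Stdlib Require Import Reals Lra List.
Open Scope R_scope.

Definition pt : Type := (R * R)%type.

Definition on_segment (p q z : pt) : Prop :=
  exists s, 0 <= s <= 1 /\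
    fst z = fst p + s * (fst q - fst p) /\ snd z = snd p + s * (snd q - snd p).

(* Elements of a Cartesian mesh of size h whose cell has lower-left corner (a,b):
   the square cell itself, or one of the triangles obtained by cutting the cell
   along a diagonal (the triangle is identified by the omitted corner). *)
Inductive corner := C0 | C1 | C2 | C3.
Inductive elem_kind := Square | Triangle (omitted : corner).

Definition corner_pt (a b h : R) (c : corner) : pt :=
  match c with
  | C0 => (a, b) | C1 => (a + h, b) | C2 => (a + h, b + h) | C3 => (a, b + h)
  end.

Definition in_elem (k : elem_kind) (a b h : R) (p : pt) : Prop :=
  let x := fst p - a in let y := snd p - b in
  0 <= x <= h /\ 0 <= y <= h /\
  match k with
  | Square => True
  | Triangle C0 => x + y >= h
  | Triangle C2 => x + y <= h
  | Triangle C1 => y >= x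
  | Triangle C3 => y <= x
  end.

Definition elem_edges (k : elem_kind) (a b h : R) : list (pt * pt) :=
  let c := corner_pt a b h in
  match k with
  | Square => (c C0, c C1) :: (c C1, c C2) :: (c C2, c C3) :: (c C3, c C0) :: nil
  | Triangle C0 => (c C1, c C2) :: (c C2, c C3) :: (c C3, c C1) :: nil
  | Triangle C1 => (c C2, c C3) :: (c C3, c C0) :: (c C0, c C2) :: nil
  | Triangle C2 => (c C3, c C0) :: (c C0, c C1) :: (c C1, c C3) :: nil
  | Triangle C3 => (c C0, c C1) :: (c C1, c C2) :: (c C2, c C0) :: nil
  end.

Definition on_boundary (k : elem_kind) (a b h : R) (p : pt) : Prop :=
  exists e, In e (elem_edges k a b h) /\ on_segment (fst e) (snd e) p.

Definition curvature (dx dy ddx ddy : R) : R :=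
  Rabs (dx * ddy - dy * ddx) / (sqrt (dx ^ 2 + dy ^ 2)) ^ 3.

(* Upper (outer Jordan) area bound: S can be covered by finitely many
   axis-parallel rectangles (x0,x1,y0,y1) of total area at most A + eps, for every eps > 0. *)
Definition rect : Type := (R * R * R * R)%type.
Definition in_rect (r : rect) (p : pt) : Prop :=
  let '(x0, x1, y0, y1) := r in x0 <= fst p <= x1 /\ y0 <= snd p <= y1.
Definition rect_area (r : rect) : R :=
  let '(x0, x1, y0, y1) := r in (x1 - x0) * (y1 - y0).
Definition rect_ok (r : rect) : Prop :=
  let '(x0, x1, y0, y1) := r in x0 <= x1 /\ y0 <= y1.

Definition area_le (S : pt -> Prop) (A : R) : Prop :=
  forall eps, 0 < eps ->
    exists rs : list rect,
      Forall rect_ok rs /\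
      (forall p, S p -> exists r, In r rs /\ in_rect r p) /\
      fold_right Rplus 0 (map rect_area rs) <= A + eps.

Record C2_curve := {
  cx : R -> R; cy : R -> R;
  cdx : R -> R; cdy : R -> R;
  cddx : R -> R; cddy : R -> R;
  cx_der : forall t, derivable_pt_lim cx t (cdx t);
  cy_der : forall t, derivable_pt_lim cy t (cdy t);
  cdx_der : forall t, derivable_pt_lim cdx t (cddx t);
  cdy_der : forall t, derivable_pt_lim cdy t (cddy t);
  cddx_cont : continuity cddx;
  cddy_cont : continuity cddy
}.

Definition gam (g : C2_curve) (t : R) : pt := (cx g t, cy g t).

(* Gamma ∩ T is the arc g([0,1]): regular, curvature <= kappa, inside T,
   meeting the boundary of T exactly at its two endpoints D = g 0 and E = g 1,
   which are distinct and lie on different edges. *)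
Definition interface_arc (k : elem_kind) (a b h kappa : R) (g : C2_curve) : Prop :=
  (forall t, 0 <= t <= 1 -> 0 < cdx g t ^ 2 + cdy g t ^ 2) /\
  (forall t, 0 <= t <= 1 ->
     curvature (cdx g t) (cdy g t) (cddx g t) (cddy g t) <= kappa) /\
  (forall t, 0 <= t <= 1 -> in_elem k a b h (gam g t)) /\
  (forall t, 0 < t < 1 -> ~ on_boundary k a b h (gam g t)) /\
  gam g 0 <> gam g 1 /\
  (exists e1 e2, In e1 (elem_edges k a b h) /\ In e2 (elem_edges k a b h) /\ e1 <> e2 /\
     on_segment (fst e1) (snd e1) (gam g 0) /\ on_segment (fst e2) (snd e2) (gam g 1)).

Definition T_int (k : elem_kind) (a b h : R) (g : C2_curve) (p : pt) : Prop :=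
  in_elem k a b h p /\
  exists t s, 0 <= t <= 1 /\
    fst p = cx g t + s * cdx g t /\ snd p = cy g t + s * cdy g t.

(* Main.v *)
Require Import Defs.
From Stdlib Require Import Reals Lra List Lia Classical.
Open Scope R_scope.

Lemma area_le_mono (S S' : pt -> Prop) A A' :
  area_le S A -> (forall z, S' z -> S z) -> A <= A' -> area_le S' A'.
Proof.
  intros H HS HA eps Heps. destruct (H eps Heps) as [rs [H1 [H2 H3]]].
  exists rs; split; [exact H1|split].
  - intros p Hp; apply H2, HS, Hp.
  - lra.
Qed.

Definition swr (r : rect) : rect := let '(x0, x1, y0, y1) := r in (y0, y1, x0, x1).

Lemma area_le_swap (S : pt -> Prop) A :
  area_le (fun z => S (snd z, fst z)) A -> area_le S A.
Proof.
  intros H eps Heps. destruct (H eps Heps) as [rs [H1 [H2 H3]]].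
  exists (map swr rs); split; [|split].
  - apply Forall_forall; intros r Hr. apply in_map_iff in Hr.
    destruct Hr as [r' [<- Hr']]. rewrite Forall_forall in H1.
    specialize (H1 r' Hr'). destruct r' as [[[x0 x1] y0] y1]; simpl in *; tauto.
  - intros [x y] Hp. destruct (H2 (y, x)) as [r [Hr Hin]]; [simpl; exact Hp|].
    exists (swr r); split; [apply in_map; exact Hr|].
    destruct r as [[[x0 x1] y0] y1]; simpl in *; tauto.
  - rewrite map_map.
    replace (map (fun x => rect_area (swr x)) rs) with (map rect_area rs); [lra|].
    apply map_ext; intros [[[x0 x1] y0] y1]; simpl; ring.
Qed.

Lemma sum_const (l : list nat) (f : nat -> rect) c :
  (forall i, rect_area (f i) = c) ->
  fold_right Rplus 0 (map rect_area (map f l)) = INR (length l) * c.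
Proof.
  intros Hf; induction l as [|i l IH]; simpl; [ring|].
  rewrite IH, Hf. destruct (length l); simpl; ring.
Qed.

Lemma find_slab (a w x : R) (n : nat) : 0 < w -> (1 <= n)%nat ->
  a <= x <= a + INR n * w -> exists i, (i < n)%nat /\ a + INR i * w <= x <= a + INR (S i) * w.
Proof.
  intros Hw Hn; induction n as [|n IH]; [lia|].
  intros Hx. destruct (Rle_dec x (a + INR n * w)) as [Hle|Hgt].
  - destruct n as [|n'].
    + simpl in *. exists 0%nat; split; [lia|]. simpl. lra.
    + destruct IH as [i [Hi Hi2]]; [lia|lra|]. exists i; split; [lia|exact Hi2].
  - exists n; split; [lia|lra].
Qed.

Lemma cover_strip (rho x0 y0 a h W : R) :
  Rabs rho <= 1 -> 0 < h -> 0 <= W ->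
  area_le (fun z => a <= fst z <= a + h /\ Rabs (snd z - y0 - rho * (fst z - x0)) <= W)
          (2 * W * h).
Proof.
  intros Hr Hh HW eps Heps.
  destruct (INR_archimed eps (2 * h * h) Heps) as [N HN].
  set (M := S N).
  assert (HM : 0 < INR M) by (apply lt_0_INR; unfold M; lia).
  assert (HNM : INR N <= INR M) by (apply le_INR; unfold M; lia).
  set (w := h / INR M).
  assert (Hw : 0 < w) by (unfold w; apply Rdiv_lt_0_compat; lra).
  assert (HwM : INR M * w = h) by (unfold w; field; lra).
  set (f := fun i : nat =>
     let c := y0 + rho * (a + INR i * w - x0) in
     (a + INR i * w, a + INR i * w + w, c - w - W, c + w + W)).
  exists (map f (seq 0 M)); split; [|split].
  - apply Forall_forall; intros r Hr'. apply in_map_iff in Hr'.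
    destruct Hr' as [i [<- _]]. unfold f; simpl. lra.
  - intros [x y] [Hx Hy]; simpl in Hx, Hy.
    destruct (find_slab a w x M Hw) as [i [Hi Hi2]]; [unfold M; lia|lra|].
    exists (f i); split.
    + apply in_map, in_seq; lia.
    + rewrite S_INR in Hi2. unfold f; simpl. split; [lra|].
      assert (Hd : Rabs (rho * (x - (a + INR i * w))) <= w).
      { rewrite Rabs_mult. rewrite (Rabs_right (x - _)) by lra.
        replace w with (1 * w) at 2 by ring. apply Rmult_le_compat; try lra; apply Rabs_pos. }
      revert Hy Hd. unfold Rabs; repeat destruct Rcase_abs; intros; nra.
  - rewrite (sum_const _ f (w * (2 * w + 2 * W))).
    + rewrite length_seq.
      replace (INR M * (w * (2 * w + 2 * W))) with (2 * W * h + 2 * h * w) by (rewrite <- HwM; ring).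
      assert (2 * h * w * INR N <= 2 * h * h).
      { unfold w. replace (2 * h * (h / INR M) * INR N) with (2*h*h * (INR N / INR M)) by (field; lra).
        assert (INR N / INR M <= 1). { apply Rmult_le_reg_r with (INR M); [lra|]. field_simplify; lra. }
        assert (0 <= 2*h*h) by nra. nra. }
      assert (2 * h * w <= eps).
      { destruct (Nat.eq_dec N 0) as [E|E].
        - rewrite E in HN; simpl in HN; nra.
        - assert (1 <= INR N) by (apply (le_INR 1); lia). nra. }
      lra.
    + intros i; unfold f; simpl. ring.
Qed.

Definition pf g ax ay u := ax * cdx g u + ay * cdy g u.
Definition qf g ax ay u := ax * cdy g u - ay * cdx g u.
Definition Xf g ax ay u := ax * cx g u + ay * cy g u.
Definition Yf g ax ay u := ax * cy g u - ay * cx g u.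

Lemma d_pf g ax ay u : derivable_pt_lim (pf g ax ay) u (ax * cddx g u + ay * cddy g u).
Proof. exact (derivable_pt_lim_plus _ _ _ _ _ (derivable_pt_lim_scal _ ax _ _ (cdx_der g u)) (derivable_pt_lim_scal _ ay _ _ (cdy_der g u))). Qed.
Lemma d_qf g ax ay u : derivable_pt_lim (qf g ax ay) u (ax * cddy g u - ay * cddx g u).
Proof. exact (derivable_pt_lim_minus _ _ _ _ _ (derivable_pt_lim_scal _ ax _ _ (cdy_der g u)) (derivable_pt_lim_scal _ ay _ _ (cdx_der g u))). Qed.
Lemma d_Xf g ax ay u : derivable_pt_lim (Xf g ax ay) u (pf g ax ay u).
Proof. exact (derivable_pt_lim_plus _ _ _ _ _ (derivable_pt_lim_scal _ ax _ _ (cx_der g u)) (derivable_pt_lim_scal _ ay _ _ (cy_der g u))). Qed.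
Lemma d_Yf g ax ay u : derivable_pt_lim (Yf g ax ay) u (qf g ax ay u).
Proof. exact (derivable_pt_lim_minus _ _ _ _ _ (derivable_pt_lim_scal _ ax _ _ (cy_der g u)) (derivable_pt_lim_scal _ ay _ _ (cx_der g u))). Qed.

Lemma cont_comb g ax ay c e u : continuity_pt (fun u => c * pf g ax ay u + e * qf g ax ay u) u.
Proof.
  apply (derivable_continuous_pt _ u (exist _ _
    (derivable_pt_lim_plus _ _ _ _ _ (derivable_pt_lim_scal _ c _ _ (d_pf g ax ay u))
       (derivable_pt_lim_scal _ e _ _ (d_qf g ax ay u))))).
Qed.

Lemma mono_cmp f g f' g' a b : a <= b ->
  (forall c, a <= c <= b -> derivable_pt_lim f c (f' c)) ->
  (forall c, a <= c <= b -> derivable_pt_lim g c (g' c)) ->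
  (forall c, a <= c <= b -> Rabs (f' c) <= g' c) ->
  Rabs (f b - f a) <= g b - g a.
Proof.
  intros Hab Hf Hg Hb. destruct (Req_dec a b) as [E|E].
  - subst. replace (f b - f b) with 0 by ring. rewrite Rabs_R0; lra.
  - assert (Hlt : a < b) by lra.
    destruct (MVT_cor2 (fun x => f x - g x) (fun x => f' x - g' x) a b Hlt) as [c1 [E1 H1]].
    { intros c Hc. exact (derivable_pt_lim_minus _ _ _ _ _ (Hf c Hc) (Hg c Hc)). }
    destruct (MVT_cor2 (fun x => f x + g x) (fun x => f' x + g' x) a b Hlt) as [c2 [E2 H2]].
    { intros c Hc. exact (derivable_pt_lim_plus _ _ _ _ _ (Hf c Hc) (Hg c Hc)). }
    assert (B1 := Hb c1 ltac:(lra)). assert (B2 := Hb c2 ltac:(lra)).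
    assert (- g' c1 <= f' c1 <= g' c1) by (revert B1; unfold Rabs; destruct Rcase_abs; intros; lra).
    assert (- g' c2 <= f' c2 <= g' c2) by (revert B2; unfold Rabs; destruct Rcase_abs; intros; lra).
    assert ((f' c1 - g' c1) * (b - a) <= 0) by nra.
    assert ((f' c2 + g' c2) * (b - a) >= 0) by nra.
    apply Rabs_le; lra.
Qed.

Lemma cont_pos f t : continuity_pt f t -> 0 < f t ->
  exists d, 0 < d /\ forall s, Rabs (s - t) < d -> 0 < f s.
Proof.
  intros H Hp. destruct (H (f t) Hp) as [d [Hd Hs]]. exists d; split; [lra|].
  intros s Hs'. destruct (Req_dec s t) as [->|Ne]; [lra|].
  assert (X := Hs s (conj (conj I (not_eq_sym Ne)) Hs')). simpl in X. unfold R_dist in X.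
  apply Rabs_def2 in X. lra.
Qed.

Lemma left_lim f t : continuity_pt f t -> 0 < t ->
  (forall s, 0 <= s < t -> 0 <= f s) -> 0 <= f t.
Proof.
  intros H Ht Hs. destruct (Rle_dec 0 (f t)) as [|Hn]; [assumption|].
  exfalso. destruct (cont_pos (fun x => - f x) t) as [d [Hd Hx]].
  - apply continuity_pt_opp; exact H.
  - lra.
  - set (s := Rmax 0 (t - d/2)).
    assert (0 <= s < t) by (unfold s; unfold Rmax; destruct Rle_dec; lra).
    assert (Rabs (s - t) < d) by (unfold s; apply Rabs_def1; unfold Rmax; destruct Rle_dec; lra).
    specialize (Hx s ltac:(assumption)). specialize (Hs s ltac:(assumption)). lra.
Qed.

Lemma cont_ind (P : R -> Prop) : P 0 ->
  (forall t, 0 < t <= 1 -> (forall s, 0 <= s < t -> P s) -> P t) ->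
  (forall t, 0 <= t < 1 -> (forall s, 0 <= s <= t -> P s) ->
      exists d, 0 < d /\ forall s, t < s < t + d -> P s) ->
  forall t, 0 <= t <= 1 -> P t.
Proof.
  intros H0 H1 H2.
  set (E := fun x => 0 <= x <= 1 /\ forall s, 0 <= s <= x -> P s).
  destruct (completeness E) as [tau [Hub Hlub]].
  - exists 1; intros x [Hx _]; lra.
  - exists 0; split; [lra|]. intros s Hs. replace s with 0 by lra. exact H0.
  - assert (E0 : E 0) by (split; [lra|]; intros s Hs; replace s with 0 by lra; exact H0).
    assert (Ht0 : 0 <= tau) by (apply Hub; exact E0).
    assert (Ht1 : tau <= 1) by (apply Hlub; intros x [Hx _]; lra).
    assert (Hbel : forall s, 0 <= s < tau -> P s).
    { intros s Hs. destruct (classic (exists x, E x /\ s <= x)) as [[x [[_ Hx] Hsx]]|Hn].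
      - apply Hx; lra.
      - exfalso. assert (U : is_upper_bound E s).
        { intros x Ex. destruct (Rle_dec x s); [assumption|]. exfalso; apply Hn; exists x; split; [assumption|lra]. }
        specialize (Hlub s U). lra. }
    assert (Ptau : P tau).
    { destruct (Req_dec tau 0) as [->|Ne]; [exact H0|]. apply H1; [lra|exact Hbel]. }
    assert (Etau : E tau).
    { split; [lra|]. intros s Hs. destruct (Req_dec s tau) as [->|Ne]; [exact Ptau|]. apply Hbel; lra. }
    destruct (Req_dec tau 1) as [E1|Ne1].
    + intros t Ht. apply (proj2 Etau); lra.
    + exfalso. destruct (H2 tau ltac:(lra) (proj2 Etau)) as [d [Hd Hs]].
      set (x := Rmin (tau + d/2) 1).
      assert (E x).
      { split; [unfold x, Rmin; destruct Rle_dec; lra|].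
        intros s Hs'. destruct (Rle_dec s tau); [apply (proj2 Etau); lra|].
        apply Hs. unfold x, Rmin in Hs'; destruct Rle_dec in Hs'; lra. }
      assert (Hxt : x <= tau) by (apply Hub; assumption).
      unfold x, Rmin in Hxt; destruct Rle_dec in Hxt; lra.
Qed.

Lemma alg_bound (ax ay dx dy ddx ddy M kappa : R) : 0 <= kappa -> 0 < M ->
  M ^ 2 <= ax ^ 2 + ay ^ 2 -> 0 < dx ^ 2 + dy ^ 2 ->
  curvature dx dy ddx ddy <= kappa ->
  0 < ax * dx + ay * dy -> Rabs (ax * dy - ay * dx) <= (ax * dx + ay * dy) / 2 ->
  Rabs (((ax * ddy - ay * ddx) * (ax * dx + ay * dy) - (ax * ddx + ay * ddy) * (ax * dy - ay * dx))
        / Rsqr (ax * dx + ay * dy)) <= 2 * kappa / M * (ax * dx + ay * dy).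
Proof.
  intros Hk HM HMm HS Hc Hp Hq.
  set (p := ax * dx + ay * dy) in *. set (q := ax * dy - ay * dx) in *.
  set (cr := dx * ddy - dy * ddx). set (m2 := ax ^ 2 + ay ^ 2).
  set (S := dx ^ 2 + dy ^ 2) in *. set (sg := sqrt S).
  assert (Hsg : 0 < sg) by (apply sqrt_lt_R0; lra).
  assert (Hsg2 : sg * sg = S) by (apply sqrt_sqrt; lra).
  assert (E1 : (ax * ddy - ay * ddx) * p - (ax * ddx + ay * ddy) * q = m2 * cr)
    by (unfold p, q, m2, cr; ring).
  assert (E2 : m2 * S = p * p + q * q) by (unfold p, q, m2, S; ring).
  assert (Hcr : Rabs cr <= kappa * sg ^ 3).
  { unfold curvature in Hc. fold cr in Hc. fold S in Hc. fold sg in Hc.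
    assert (0 < sg ^ 3) by (apply pow_lt; lra).
    apply Rmult_le_reg_r with (/ sg ^ 3); [apply Rinv_0_lt_compat; lra|].
    replace (kappa * sg ^ 3 * / sg ^ 3) with kappa by (field; lra). exact Hc. }
  assert (Hq2 : q * q <= p * p / 4).
  { assert (Rabs q * Rabs q <= (p/2) * (p/2)) by (apply Rmult_le_compat; try apply Rabs_pos; lra).
    rewrite <- Rabs_mult, Rabs_right in H by nra. lra. }
  assert (Hm2 : m2 * (sg * sg) <= 5/4 * (p * p)) by (rewrite Hsg2; lra).
  assert (HMsg : M * sg <= 6/5 * p).
  { assert ((M * sg) * (M * sg) <= (6/5 * p) * (6/5 * p)).
    { replace ((M*sg)*(M*sg)) with (M^2 * (sg*sg)) by ring.
      assert (M^2 * (sg*sg) <= m2 * (sg*sg)) by (apply Rmult_le_compat_r; [nra|exact HMm]). nra. }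
    destruct (Rle_dec (M*sg) (6/5*p)) as [|Hn]; [assumption|]. exfalso.
    assert ((M*sg - 6/5*p)*(M*sg + 6/5*p) > 0) by (apply Rmult_lt_0_compat; nra). nra. }
  rewrite E1. unfold Rdiv. rewrite Rabs_mult, Rabs_mult.
  rewrite (Rabs_right m2) by (unfold m2; nra).
  rewrite (Rabs_right (/ p²)) by (left; apply Rinv_0_lt_compat; unfold Rsqr; nra).
  assert (Key : m2 * (kappa * sg ^ 3) * M <= 2 * kappa * (p * p * p)).
  { replace (m2 * (kappa * sg ^ 3) * M) with (kappa * ((m2 * (sg * sg)) * (M * sg))) by ring.
    assert ((m2 * (sg * sg)) * (M * sg) <= (5/4 * (p*p)) * (6/5 * p)).
    { apply Rmult_le_compat; try lra; [unfold m2; nra| nra]. }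
    assert (Hx : (m2 * (sg * sg)) * (M * sg) <= 2 * (p*p*p)) by nra.
    replace (2 * kappa * (p*p*p)) with (kappa * (2 * (p*p*p))) by ring.
    apply Rmult_le_compat_l; assumption. }
  apply Rmult_le_reg_r with (p² * M); [unfold Rsqr; apply Rmult_lt_0_compat; [apply Rmult_lt_0_compat|]; lra|].
  replace (m2 * Rabs cr * / p² * (p² * M)) with (m2 * Rabs cr * M) by (field; unfold Rsqr; nra).
  replace (2 * kappa * / M * p * (p² * M)) with (2 * kappa * (p*p*p)) by (unfold Rsqr; field; lra).
  assert (m2 * Rabs cr * M <= m2 * (kappa * sg^3) * M).
  { apply Rmult_le_compat_r; [lra|]. apply Rmult_le_compat_l; [unfold m2; nra|exact Hcr]. }
  lra.
Qed.

Lemma in_box k a b h p : in_elem k a b h p -> a <= fst p <= a + h /\ b <= snd p <= b + h.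
Proof. unfold in_elem; intros [H1 [H2 _]]; lra. Qed.

Lemma two_bound ax ay M d1 d2 h : Rabs ax <= M -> Rabs ay <= M -> Rabs d1 <= h -> Rabs d2 <= h ->
  Rabs (ax * d1 + ay * d2) <= 2 * M * h.
Proof.
  intros H1 H2 H3 H4. eapply Rle_trans; [apply Rabs_triang|]. rewrite !Rabs_mult.
  assert (Rabs ax * Rabs d1 <= M * h) by (apply Rmult_le_compat; try apply Rabs_pos; lra).
  assert (Rabs ay * Rabs d2 <= M * h) by (apply Rmult_le_compat; try apply Rabs_pos; lra).
  lra.
Qed.


Lemma abs_diff_le x y a h : a <= x <= a + h -> a <= y <= a + h -> Rabs (x - y) <= h.
Proof. intros; apply Rabs_le; lra. Qed.

Lemma Mfacts ax ay : 0 < ax ^ 2 + ay ^ 2 ->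
  let M := Rmax (Rabs ax) (Rabs ay) in
  0 < M /\ Rabs ax <= M /\ Rabs ay <= M /\ M ^ 2 <= ax ^ 2 + ay ^ 2.
Proof.
  intros H M. assert (Hx : Rabs ax <= M) by apply Rmax_l. assert (Hy : Rabs ay <= M) by apply Rmax_r.
  assert (Ex : Rabs ax ^ 2 = ax ^ 2) by (apply pow2_abs).
  assert (Ey : Rabs ay ^ 2 = ay ^ 2) by (apply pow2_abs).
  assert (0 <= Rabs ax) by apply Rabs_pos. assert (0 <= Rabs ay) by apply Rabs_pos.
  split; [|split; [exact Hx|split; [exact Hy|]]].
  - destruct (Rlt_dec 0 M) as [|Hn]; [assumption|]. exfalso.
    assert (Rabs ax = 0) by lra. assert (Rabs ay = 0) by lra. nra.
  - unfold M, Rmax; destruct Rle_dec; nra.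
Qed.

Definition Pgood g u := 0 < pf g (cdx g 0) (cdy g 0) u /\
   Rabs (qf g (cdx g 0) (cdy g 0) u) <= pf g (cdx g 0) (cdy g 0) u / 2.

Lemma key g k a b h kappa : 0 <= kappa -> 0 < h -> interface_arc k a b h kappa g ->
  forall s, 0 <= s <= 1 -> (forall u, 0 <= u <= s -> Pgood g u) ->
  Rabs (qf g (cdx g 0) (cdy g 0) s) <= 4 * kappa * h * pf g (cdx g 0) (cdy g 0) s.
Proof.
  intros Hk Hh [Hreg [Hcurv [Hin _]]] s Hs HP. unfold Pgood in HP.
  set (ax := cdx g 0) in *. set (ay := cdy g 0) in *.
  destruct (Mfacts ax ay (Hreg 0 ltac:(lra))) as [HM [HMx [HMy HM2]]].
  set (M := Rmax (Rabs ax) (Rabs ay)) in *.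
  assert (Hm := mono_cmp (fun u => qf g ax ay u / pf g ax ay u)
    (fun u => (2 * kappa / M) * Xf g ax ay u)
    (fun u => ((ax * cddy g u - ay * cddx g u) * pf g ax ay u - (ax * cddx g u + ay * cddy g u) * qf g ax ay u) / Rsqr (pf g ax ay u))
    (fun u => (2 * kappa / M) * pf g ax ay u) 0 s ltac:(lra)).
  destruct (HP s ltac:(lra)) as [Hps _].
  assert (Hb : Rabs (qf g ax ay s / pf g ax ay s - qf g ax ay 0 / pf g ax ay 0) <=
      2 * kappa / M * Xf g ax ay s - 2 * kappa / M * Xf g ax ay 0).
  { apply Hm.
    - intros c Hc. destruct (HP c Hc) as [Hpc _].
      exact (derivable_pt_lim_div _ _ _ _ _ (d_qf g ax ay c) (d_pf g ax ay c) ltac:(lra)).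
    - intros c Hc. exact (derivable_pt_lim_scal _ _ _ _ (d_Xf g ax ay c)).
    - intros c Hc. destruct (HP c Hc) as [Hpc Hqc].
      unfold pf, qf in *. apply alg_bound; try assumption.
      + apply Hreg; lra.
      + apply Hcurv; lra. }
  assert (Hq0 : qf g ax ay 0 = 0) by (unfold qf, ax, ay; ring).
  rewrite Hq0 in Hb. replace (0 / pf g ax ay 0) with 0 in Hb by (unfold Rdiv; ring).
  assert (HX : Xf g ax ay s - Xf g ax ay 0 <= 2 * M * h).
  { assert (B1 := in_box _ _ _ _ _ (Hin s Hs)). assert (B0 := in_box _ _ _ _ _ (Hin 0 ltac:(lra))).
    unfold gam in B1, B0; simpl in B1, B0.
    assert (Rabs (ax * (cx g s - cx g 0) + ay * (cy g s - cy g 0)) <= 2 * M * h).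
    { apply two_bound; try assumption; [apply (abs_diff_le _ _ a h); lra | apply (abs_diff_le _ _ b h); lra]. }
    unfold Xf. revert H; unfold Rabs; destruct Rcase_abs; intros; lra. }
  rewrite Rminus_0_r in Hb. unfold Rdiv in Hb. rewrite Rabs_mult, (Rabs_right (/ _)) in Hb
    by (left; apply Rinv_0_lt_compat; lra).
  assert (Hb2 : Rabs (qf g ax ay s) * / pf g ax ay s <= 4 * kappa * h).
  { eapply Rle_trans; [exact Hb|].
    replace (2 * kappa * / M * Xf g ax ay s - 2 * kappa * / M * Xf g ax ay 0) with
      (2 * kappa * / M * (Xf g ax ay s - Xf g ax ay 0)) by ring.
    assert (0 <= 2 * kappa * / M) by (assert (0 < / M) by (apply Rinv_0_lt_compat; lra); nra).
    apply Rle_trans with (2 * kappa * / M * (2 * M * h)); [apply Rmult_le_compat_l; assumption|].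
    right; field; lra. }
  apply Rmult_le_reg_r with (/ pf g ax ay s); [apply Rinv_0_lt_compat; lra|].
  replace (4 * kappa * h * pf g ax ay s * / pf g ax ay s) with (4 * kappa * h) by (field; lra).
  exact Hb2.
Qed.

Lemma box_two k a b h ax ay M p1 p2 : Rabs ax <= M -> Rabs ay <= M ->
  in_elem k a b h p1 -> in_elem k a b h p2 ->
  Rabs (ax * (fst p1 - fst p2) + ay * (snd p1 - snd p2)) <= 2 * M * h.
Proof.
  intros Hx Hy H1 H2. apply in_box in H1. apply in_box in H2.
  apply two_bound; try assumption; [apply (abs_diff_le _ _ a h); lra | apply (abs_diff_le _ _ b h); lra].
Qed.

Lemma absinv x y : Rabs x <= y -> - y <= x <= y.
Proof. unfold Rabs; destruct Rcase_abs; intros; lra. Qed.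

Lemma all_good g k a b h kappa : 0 <= kappa -> 0 < h -> 16 * kappa * h <= 1 ->
  interface_arc k a b h kappa g -> forall t, 0 <= t <= 1 -> Pgood g t.
Proof.
  intros Hk Hh Hsm Harc.
  assert (Hreg := proj1 Harc).
  assert (Hid : forall u, (cdx g 0 ^ 2 + cdy g 0 ^ 2) * (cdx g u ^ 2 + cdy g u ^ 2) =
      pf g (cdx g 0) (cdy g 0) u ^ 2 + qf g (cdx g 0) (cdy g 0) u ^ 2) by (intros; unfold pf, qf; ring).
  assert (H0 := Hreg 0 ltac:(lra)).
  apply cont_ind.
  - unfold Pgood, pf, qf. split; [nra|]. replace (cdx g 0 * cdy g 0 - cdy g 0 * cdx g 0) with 0 by ring.
    rewrite Rabs_R0. nra.
  - intros t Ht HP.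
    assert (Hs : forall s, 0 <= s < t -> Rabs (qf g (cdx g 0) (cdy g 0) s) <= pf g (cdx g 0) (cdy g 0) s / 4).
    { intros s Hs. assert (K := key g k a b h kappa Hk Hh Harc s ltac:(lra) ltac:(intros u Hu; apply HP; lra)).
      destruct (HP s Hs) as [Hp _]. assert (4 * kappa * h * pf g (cdx g 0) (cdy g 0) s <= pf g (cdx g 0) (cdy g 0) s / 4) by nra. lra. }
    assert (L1 := left_lim _ t (cont_comb g (cdx g 0) (cdy g 0) (1/4) (-1) t) ltac:(lra)
       ltac:(intros s Hs'; specialize (Hs s Hs'); apply absinv in Hs; lra)).
    assert (L2 := left_lim _ t (cont_comb g (cdx g 0) (cdy g 0) (1/4) 1 t) ltac:(lra)
       ltac:(intros s Hs'; specialize (Hs s Hs'); apply absinv in Hs; lra)).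
    cbv beta in L1, L2. unfold Pgood.
    assert (Hpt : 0 < pf g (cdx g 0) (cdy g 0) t).
    { destruct (Rlt_dec 0 (pf g (cdx g 0) (cdy g 0) t)) as [|Hn]; [assumption|]. exfalso.
      assert (E1 : pf g (cdx g 0) (cdy g 0) t = 0) by lra.
      assert (E2 : qf g (cdx g 0) (cdy g 0) t = 0) by lra.
      assert (H1 := Hreg t ltac:(lra)). specialize (Hid t). rewrite E1, E2 in Hid.
      assert (0 < (cdx g 0 ^ 2 + cdy g 0 ^ 2) * (cdx g t ^ 2 + cdy g t ^ 2)) by (apply Rmult_lt_0_compat; lra).
      lra. }
    split; [exact Hpt|]. apply Rabs_le; lra.
  - intros t Ht HP.
    assert (K := key g k a b h kappa Hk Hh Harc t ltac:(lra) HP).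
    destruct (HP t ltac:(lra)) as [Hp _].
    assert (Hq : Rabs (qf g (cdx g 0) (cdy g 0) t) <= pf g (cdx g 0) (cdy g 0) t / 4) by nra.
    apply absinv in Hq.
    destruct (cont_pos _ t (cont_comb g (cdx g 0) (cdy g 0) (1/2) (-1) t)) as [d1 [Hd1 P1]]; [lra|].
    destruct (cont_pos _ t (cont_comb g (cdx g 0) (cdy g 0) (1/2) 1 t)) as [d2 [Hd2 P2]]; [lra|].
    exists (Rmin d1 d2); split; [apply Rmin_pos; assumption|].
    intros s Hs. assert (Rabs (s - t) < d1) by (apply Rabs_def1; assert (Rmin d1 d2 <= d1) by apply Rmin_l; lra).
    assert (Rabs (s - t) < d2) by (apply Rabs_def1; assert (Rmin d1 d2 <= d2) by apply Rmin_r; lra).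
    specialize (P1 s ltac:(assumption)). specialize (P2 s ltac:(assumption)). cbv beta in P1, P2.
    unfold Pgood. split; [lra|]. apply Rabs_le; lra.
Qed.

Lemma strip g k a b h kappa : 0 <= kappa -> 0 < h -> 16 * kappa * h <= 1 ->
  interface_arc k a b h kappa g -> forall z, T_int k a b h g z ->
  Rabs (cdx g 0 * (snd z - cy g 0) - cdy g 0 * (fst z - cx g 0)) <=
    16 * kappa * Rmax (Rabs (cdx g 0)) (Rabs (cdy g 0)) * h * h.
Proof.
  intros Hk Hh Hsm Harc [zx zy] [Hz [t [s0 [Ht [Ex Ey]]]]]. simpl in Ex, Ey |- *.
  assert (Hgood : forall u, 0 <= u <= 1 ->
    Rabs (qf g (cdx g 0) (cdy g 0) u) <= 4 * kappa * h * pf g (cdx g 0) (cdy g 0) u).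
  { intros u Hu. apply (key g k a b h kappa Hk Hh Harc u Hu).
    intros v Hv; apply (all_good g k a b h kappa Hk Hh Hsm Harc); lra. }
  assert (Hpos := proj1 (all_good g k a b h kappa Hk Hh Hsm Harc t Ht)). unfold Pgood in Hpos.
  destruct Harc as [Hreg [_ [Hin _]]].
  set (ax := cdx g 0) in *. set (ay := cdy g 0) in *.
  destruct (Mfacts ax ay (Hreg 0 ltac:(lra))) as [HM [HMx [HMy HM2]]].
  set (M := Rmax (Rabs ax) (Rabs ay)) in *.
  set (d := 4 * kappa * h) in *.
  assert (HY : Rabs (Yf g ax ay t - Yf g ax ay 0) <= d * Xf g ax ay t - d * Xf g ax ay 0).
  { apply (mono_cmp (Yf g ax ay) (fun u => d * Xf g ax ay u) (qf g ax ay) (fun u => d * pf g ax ay u) 0 t ltac:(lra)).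
    - intros c _; apply d_Yf.
    - intros c _; exact (derivable_pt_lim_scal _ _ _ _ (d_Xf g ax ay c)).
    - intros c Hc; apply Hgood; lra. }
  assert (HX : Xf g ax ay t - Xf g ax ay 0 <= 2 * M * h).
  { assert (B := box_two k a b h ax ay M (gam g t) (gam g 0) HMx HMy (Hin t Ht) (Hin 0 ltac:(lra))).
    unfold gam in B; simpl in B. apply absinv in B. unfold Xf. lra. }
  assert (HS : Rabs (s0 * pf g ax ay t) <= 2 * M * h).
  { assert (B := box_two k a b h ax ay M (zx, zy) (gam g t) HMx HMy Hz (Hin t Ht)).
    unfold gam in B; simpl in B. rewrite Ex, Ey in B. unfold pf.
    replace (s0 * (ax * cdx g t + ay * cdy g t)) with
      (ax * (cx g t + s0 * cdx g t - cx g t) + ay * (cy g t + s0 * cdy g t - cy g t)) by ring.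
    exact B. }
  assert (Hp : 0 <= pf g ax ay t) by lra.
  assert (0 <= d) by (unfold d; nra).
  assert (HQ : Rabs (s0 * qf g ax ay t) <= d * (2 * M * h)).
  { rewrite Rabs_mult. rewrite Rabs_mult, (Rabs_right (pf g ax ay t)) in HS by lra.
    assert (Rabs s0 * Rabs (qf g ax ay t) <= Rabs s0 * (d * pf g ax ay t))
      by (apply Rmult_le_compat_l; [apply Rabs_pos|apply Hgood; lra]).
    assert (d * (Rabs s0 * pf g ax ay t) <= d * (2 * M * h)) by (apply Rmult_le_compat_l; lra).
    nra. }
  replace (ax * (zy - cy g 0) - ay * (zx - cx g 0)) with
    ((Yf g ax ay t - Yf g ax ay 0) + s0 * qf g ax ay t) by (unfold Yf, qf; rewrite Ex, Ey; ring).
  eapply Rle_trans; [apply Rabs_triang|].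
  assert (d * Xf g ax ay t - d * Xf g ax ay 0 <= d * (2 * M * h)) by nra.
  unfold d in *. nra.
Qed.

Theorem mainTheorem4 :
  forall kappa : R, 0 <= kappa ->
  exists C : R, exists h0 : R, 0 < h0 /\
    forall (h a b : R) (k : elem_kind) (g : C2_curve),
      0 < h < h0 ->
      interface_arc k a b h kappa g ->
      area_le (T_int k a b h g) (C * h ^ 3).
Proof.
  intros kappa Hk. exists (32 * kappa), (1 / (16 * kappa + 1)). split.
  { apply Rdiv_lt_0_compat; lra. }
  intros h a b k g [Hh Hh0] Harc.
  assert (Hsm : 16 * kappa * h <= 1).
  { apply Rmult_lt_compat_r with (r := 16 * kappa + 1) in Hh0; [|lra].
    replace (1 / (16 * kappa + 1) * (16 * kappa + 1)) with 1 in Hh0 by (field; lra). nra. }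
  assert (HS := strip g k a b h kappa Hk Hh Hsm Harc).
  assert (Hreg := proj1 Harc).
  destruct (Mfacts (cdx g 0) (cdy g 0) (Hreg 0 ltac:(lra))) as [HM [HMx [HMy HM2]]].
  set (ax := cdx g 0) in *. set (ay := cdy g 0) in *.
  set (M := Rmax (Rabs ax) (Rabs ay)) in *.
  assert (HW : 0 <= 16 * kappa * h * h) by nra.
  destruct (Rle_dec (Rabs ay) (Rabs ax)) as [Hxy|Hyx].
  - assert (HMe : M = Rabs ax) by (unfold M, Rmax; destruct Rle_dec; lra).
    assert (Hax : ax <> 0) by (intro E; rewrite E, Rabs_R0 in HMe; lra).
    eapply area_le_mono.
    + apply (cover_strip (ay / ax) (cx g 0) (cy g 0) a h (16 * kappa * h * h)); try lra.
      unfold Rdiv; rewrite Rabs_mult, Rabs_inv.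
      apply Rmult_le_reg_r with (Rabs ax); [apply Rabs_pos_lt; exact Hax|].
      field_simplify; [lra|apply Rabs_no_R0; exact Hax].
    + intros z Hz. split.
      * destruct Hz as [Hz _]. apply in_box in Hz; lra.
      * specialize (HS z Hz). rewrite HMe in HS.
        apply Rmult_le_reg_l with (Rabs ax); [apply Rabs_pos_lt; exact Hax|].
        rewrite <- Rabs_mult.
        replace (ax * (snd z - cy g 0 - ay / ax * (fst z - cx g 0))) with
          (ax * (snd z - cy g 0) - ay * (fst z - cx g 0)) by (field; exact Hax).
        lra.
    + lra.
  - assert (HMe : M = Rabs ay) by (unfold M, Rmax; destruct Rle_dec; lra).
    assert (Hay : ay <> 0) by (intro E; rewrite E, Rabs_R0 in Hyx; assert (0 <= Rabs ax) by apply Rabs_pos; lra).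
    apply area_le_swap.
    eapply area_le_mono.
    + apply (cover_strip (ax / ay) (cy g 0) (cx g 0) b h (16 * kappa * h * h)); try lra.
      unfold Rdiv; rewrite Rabs_mult, Rabs_inv.
      apply Rmult_le_reg_r with (Rabs ay); [apply Rabs_pos_lt; exact Hay|].
      field_simplify; [lra|apply Rabs_no_R0; exact Hay].
    + intros [x y] Hz; simpl in Hz |- *. split.
      * destruct Hz as [Hz _]. apply in_box in Hz; simpl in Hz; lra.
      * specialize (HS _ Hz). simpl in HS. rewrite HMe in HS.
        apply Rmult_le_reg_l with (Rabs ay); [apply Rabs_pos_lt; exact Hay|].
        rewrite <- Rabs_mult.
        replace (ay * (y - cx g 0 - ax / ay * (x - cy g 0))) with
          (- (ax * (x - cy g 0) - ay * (y - cx g 0))) by (field; exact Hay).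
        rewrite Rabs_Ropp. lra.
    + lra.
Qed.
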